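(* Let $x:[p]\to[r]$ be a strictly increasing set map. Then there exists a unique decomposition of $x$ as $[p]\xrightarrow{\mu}[p']\xrightarrow{\phi}[q]\xrightarrow{\psi}[r]$ such that $\phi$ is non-twisted, $\psi\in\square$, and $\mu=(g_1,\dots,g_{p'})$ where the $g_i:[p]\to[1]$ are non-constant and mutually distinct (i.e. $g_i=g_j$ implies $i=j$). Moreover $p\le p'$, $\mu$ is strictly increasing, and $\mu$ is adjacency-preserving if and only if $p=p'$.
   Context: $[0]=\{()\}$, $[n]=\{0,1\}^n$ ($n\ge1$) with the product order. Face maps $\delta_i^\alpha:[n-1]\to[n]$ insert $\alpha\in\{0,1\}$ at position $i$; $\square$ is the category with objects $[n]$, $n\ge0$, generated by the face maps. A map is adjacency-preserving if strictly increasing and it sends pairs at Hamming distance $1$ to pairs at Hamming distance $1$. A map $\phi:[p']\to[q]$ is non-twisted if it is of the form $(\epsilon_1,\dots,\epsilon_{p'})\mapsto(\epsilon_{i_1},\dots,\epsilon_{i_q})$ with $\{1,\dots,p'\}\subset\{i_1,\dots,i_q\}$ and such that, reading from left to right, the first appearance of $\epsilon_i$ is before the first appearance of $\epsilon_{i+1}$ for every $i$. A map $[p]\to[p']$ is written $(g_1,\dots,g_{p'})$ in terms of its coordinate functions $g_i:[p]\to[1]=\{0,1\}$. *)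

(* Defs.v *)
From mathcomp Require Import all_boot all_order.
Set Implicit Arguments. Unset Strict Implicit. Unset Printing Implicit Defensive.

(* [n] = {0,1}^n, coordinates indexed by 'I_n (so [0] is a one-point set). *)
Definition cube (n : nat) : finType := {ffun 'I_n -> bool}.

(* Set maps [m] -> [n], as finite functions (so Leibniz equality = extensional). *)
Definition cmap (m n : nat) := {ffun cube m -> cube n}.

Definition cle n (a b : cube n) : bool := [forall i, a i ==> b i].
Definition clt n (a b : cube n) : bool := cle a b && (a != b).

Definition strict_incr m n (f : cube m -> cube n) : Prop :=
  forall a b, clt a b -> clt (f a) (f b).

Definition hdist n (a b : cube n) : nat := #|[set i | a i != b i]|.

Definition adjacency_preserving m n (f : cube m -> cube n) : Prop :=
  strict_incr f /\ forall a b, hdist a b = 1 -> hdist (f a) (f b) = 1.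

(* face map delta_i^alpha : [n] -> [n+1], inserting alpha at position i
   (0-based position i : 'I_(n+1)) *)
Definition face n (i : 'I_n.+1) (alpha : bool) (x : cube n) : cube n.+1 :=
  [ffun j : 'I_n.+1 => match unlift i j with None => alpha | Some j' => x j' end].

(* the maps of the category "box" generated by the face maps (including identities),
   up to pointwise equality of set maps *)
Inductive box_map : forall q r : nat, (cube q -> cube r) -> Prop :=
  | box_id q : box_map (fun x : cube q => x)
  | box_face q r (f : cube q -> cube r) (i : 'I_r.+1) (alpha : bool) :
      box_map f -> box_map (fun x => face i alpha (f x))
  | box_ext q r (f g : cube q -> cube r) :
      box_map f -> (forall x, g x = f x) -> box_map g.

(* phi : [p'] -> [q] is non-twisted: phi eps = (eps_{s 0}, ..., eps_{s (q-1)})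
   where every index of [p'] occurs among the s k, and first appearances
   occur in increasing order. *)
Definition non_twisted p' q (phi : cube p' -> cube q) : Prop :=
  exists s : 'I_q -> 'I_p',
    [/\ forall x, phi x = [ffun k => x (s k)],
        forall i : 'I_p', i \in codom s &
        forall i j : 'I_p', val j = (val i).+1 ->
           index i (codom s) < index j (codom s)].

Definition good_mu p p' (mu : cube p -> cube p') : Prop :=
  (forall i : 'I_p', exists a b, mu a i != mu b i) /\
  (forall i j : 'I_p', (forall a, mu a i = mu a j) -> i = j).

Definition decomposition p r := {p' : nat & {q : nat & (cmap p p' * cmap p' q * cmap q r)%type}}.

Definition is_decomposition p r (x : cube p -> cube r) (d : decomposition p r) : Prop :=
  match d with
  | existT p' (existT q (mu, phi, psi)) =>
      [/\ forall a, x a = psi (phi (mu a)),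
          non_twisted (fun y => phi y),
          box_map (fun y => psi y) &
          good_mu (fun y => mu y)]
  end.

Definition decomposition_extra p r (d : decomposition p r) : Prop :=
  match d with
  | existT p' (existT q (mu, phi, psi)) =>
      [/\ p <= p',
          strict_incr (fun y => mu y) &
          (adjacency_preserving (fun y => mu y) <-> p = p')]
  end.

(* Main.v *)
Require Import Defs.
From mathcomp Require Import all_boot all_order.
From mathcomp Require Import zify.
Set Implicit Arguments. Unset Strict Implicit. Unset Printing Implicit Defensive.

Definition sincr q r (e : 'I_q -> 'I_r) := forall i j : 'I_q, i < j -> e i < e j.
Definition emb_form q r (f : cube q -> cube r) (e : 'I_q -> 'I_r) (v : 'I_r -> bool) :=
  [/\ sincr e, (forall y j, f y (e j) = y j) & (forall y k, k \notin codom e -> f y k = v k)].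

Lemma bump_lt h i j : (bump h i < bump h j) = (i < j).
Proof. rewrite /bump; case: (leqP h i); case: (leqP h j) => /= ? ?; lia. Qed.

Lemma box_emb q r (f : cube q -> cube r) : box_map f -> exists e v, emb_form f e v.
Proof.
elim=> {q r f}.
- move=> q; exists id, (fun _ => false); split => //.
  by move=> y k; move/negP; case; apply: codom_f.
- move=> q r f i al _ [e [v [He1 He2 He3]]].
  exists (fun j => lift i (e j)).
  exists (fun k => if unlift i k is Some k' then v k' else al).
  split.
  + by move=> a b ab; rewrite /= bump_lt He1.
  + by move=> y j; rewrite /face ffunE liftK He2.
  + move=> y k Hk; rewrite /face ffunE; case: unliftP Hk => [k'|] -> // Hk.
    apply: He3; apply/negP => /codomP [j Hj]; move/negP: Hk; apply.
    by rewrite Hj; apply: codom_f.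
- move=> q r f g _ [e [v [He1 He2 He3]]] Hgf; exists e, v; split => //.
  + by move=> y j; rewrite Hgf.
  + by move=> y k Hk; rewrite Hgf He3.
Qed.

Lemma sincr_ge m n (e : 'I_m -> 'I_n) : sincr e -> forall i : 'I_m, i <= e i.
Proof.
move=> He.
suff H : forall k (i : 'I_m), val i = k -> k <= e i by move=> i; exact: H.
elim=> [//|k IH] i Hi.
have Hk : k < m by move: (ltn_ord i); rewrite Hi; lia.
have := IH (Ordinal Hk) erefl.
have := He (Ordinal Hk) i; rewrite Hi /= => /(_ (ltnSn k)); lia.
Qed.

Lemma sincr_id n (e : 'I_n -> 'I_n) : sincr e -> forall i : 'I_n, e i = i.
Proof.
move=> He i; apply: val_inj => /=; apply/eqP; rewrite eqn_leq sincr_ge // andbT.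
pose e' := fun j => rev_ord (e (rev_ord j)).
have He' : sincr e'.
  move=> a b ab; rewrite /e' /=.
  have : e (rev_ord b) < e (rev_ord a) by apply: He => /=; move: (ltn_ord a) (ltn_ord b); lia.
  move: (ltn_ord (e (rev_ord a))) (ltn_ord (e (rev_ord b))); lia.
have := sincr_ge He' (rev_ord i); rewrite /e' /= rev_ordK.
move: (ltn_ord i) (ltn_ord (e i)); lia.
Qed.

Lemma emb_box r : forall q (f : cube q -> cube r) e v, emb_form f e v -> box_map f.
Proof.
elim: r => [|r IH] q f e v.
  case: q f e => [|q] f e; last by move=> _; case: (e ord0).
  move=> _; apply: (box_ext (box_id 0)) => y; apply/ffunP; by case=> i; move=> H; exfalso; move: H; rewrite ltn0.
case: (boolP [forall k, k \in codom e]) => [/forallP Hall|].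
  move=> [He1 He2 He3].
  have einj : injective e.
    move=> a b; case: (ltngtP a b) => [ab|ba|/val_inj //].
    - by move=> Heq; have := He1 _ _ ab; rewrite Heq ltnn.
    - by move=> Heq; have := He1 _ _ ba; rewrite Heq ltnn.
  have Hq : q = r.+1.
    have H1 : #|codom e| = q by rewrite card_codom // card_ord.
    have H2 : #|codom e| = r.+1.
      by rewrite -[RHS]card_ord; apply: eq_card => k; rewrite Hall.
    by rewrite -H1 H2.
  subst q.
  apply: (box_ext (box_id r.+1)) => y; apply/ffunP => k.
  by rewrite -{1}(sincr_id He1 k) He2.
move/forallPn => [k Hk] [He1 He2 He3].
have : forall j, exists j', lift k j' = e j.
  move=> j; case: (unliftP k (e j)) => [j'|] Hj; first by exists j'.
  by move: Hk; rewrite -Hj codom_f.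
move=> /fin_all_exists [e' He'].
pose f' := fun y : cube q => [ffun j : 'I_r => f y (lift k j)].
have Hf' : box_map f'.
  apply: (IH q f' e' (fun j => v (lift k j))); split.
  - move=> a b ab; have := He1 _ _ ab; by rewrite -!He' /= bump_lt.
  - by move=> y j; rewrite /f' ffunE He' He2.
  - move=> y j Hj; rewrite /f' ffunE He3 //; apply/negP => /codomP [i Hi].
    move/negP: Hj; apply; rewrite -He' in Hi; rewrite (lift_inj Hi); exact: codom_f.
apply: (box_ext (box_face k (v k) Hf')) => y; apply/ffunP => z.
rewrite /face ffunE; case: unliftP => [z'|] ->; first by rewrite /f' ffunE.
by rewrite He3.
Qed.
Definition wt n (a : cube n) := #|[set i | a i]|.

Lemma cleP n (a b : cube n) : cle a b <-> forall i, a i -> b i.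
Proof. rewrite /cle; split=> [/forallP H i Hi|H]; [exact: (implyP (H i) Hi) | apply/forallP => i; apply/implyP/H]. Qed.

Lemma cle_app n (a b : cube n) : cle a b -> forall i, a i -> b i.
Proof. by move/cleP. Qed.
Arguments cle_app {n a b} _ i _.

Lemma cle_refl n (a : cube n) : cle a a.
Proof. by apply/cleP. Qed.

Lemma cle_trans n (a b c : cube n) : cle a b -> cle b c -> cle a c.
Proof. by move=> /cleP H1 /cleP H2; apply/cleP => i /H1 /H2. Qed.

Lemma cle_hdist n (a b : cube n) : cle a b -> wt b = wt a + hdist a b.
Proof.
move=> /cleP H; rewrite /wt /hdist -(cardsID [set i | a i] [set i | b i]).
congr (_ + _); apply: eq_card => i; rewrite !inE.
- by case: (boolP (a i)) => [/H ->|] //; rewrite andbF.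
- by case: (boolP (a i)) => [/H ->|] //=; case: (b i).
Qed.

Lemma hdist_refl n (a : cube n) : hdist a a = 0.
Proof. by rewrite /hdist; apply: eq_card0 => i; rewrite inE eqxx. Qed.

Lemma hdistC n (a b : cube n) : hdist a b = hdist b a.
Proof. by rewrite /hdist; apply: eq_card => i; rewrite !inE eq_sym. Qed.

Lemma hdist0 n (a b : cube n) : hdist a b = 0 -> a = b.
Proof.
move/eqP; rewrite cards_eq0 => /eqP H; apply/ffunP => i; apply/eqP.
apply: negbNE; apply/negP => Hi; have : i \in [set i | a i != b i] by rewrite inE.
by rewrite H inE.
Qed.

Lemma clt_wt n (a b : cube n) : clt a b -> wt a < wt b.
Proof.
move=> /andP [Hab Hne]; rewrite (cle_hdist Hab); case: (posnP (hdist a b)) => [/hdist0 E|]; last by lia.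
by rewrite E eqxx in Hne.
Qed.

Lemma hdist1_cmp n (a b : cube n) : hdist a b = 1 -> cle a b \/ cle b a.
Proof.
move=> /eqP /cards1P [i Hi].
have Hj : forall j, j != i -> a j = b j.
  move=> j Hj; apply/eqP; apply: negbNE; apply/negP => H.
  have : j \in [set i | a i != b i] by rewrite inE.
  by rewrite Hi inE (negbTE Hj).
case Ha: (a i); [right|left]; apply/cleP => j; case: (eqVneq j i) => [->|/Hj ->] //.
by rewrite Ha.
Qed.

Lemma sincr_mono m n (f : cube m -> cube n) a b :
  strict_incr f -> cle a b -> cle (f a) (f b).
Proof.
move=> Hf Hab; case: (eqVneq a b) => [->|ne]; first exact: cle_refl.
by have /andP [] := Hf a b (introT andP (conj Hab ne)).
Qed.

Lemma step n (a b : cube n) : cle a b -> a != b ->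
  exists a', [/\ clt a a', cle a' b, hdist a a' = 1 & wt a' = (wt a).+1].
Proof.
move=> Hab ne.
have : exists i, b i && ~~ a i.
  apply/existsP; apply: contraR ne; rewrite negb_exists => /forallP H.
  apply/eqP/ffunP => i; move/cleP: Hab => /(_ i); have := H i.
  by case: (a i); case: (b i) => //= _ /(_ isT).
move=> [i /andP [Hb Ha]].
pose a' := [ffun j => a j || (j == i)].
have Haa' : cle a a' by apply/cleP => j; rewrite ffunE => ->.
have Hd : hdist a a' = 1.
  rewrite /hdist -(cards1 i); apply: eq_card => j; rewrite !inE ffunE.
  by case: (eqVneq j i) => [->|_]; rewrite ?(negbTE Ha) ?orbF ?orbT ?eqxx.
exists a'; split => //.
- apply/andP; split => //; apply/eqP => E; move: Hd; rewrite -E.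
  move=> /eqP /cards1P [k Hk]; have : k \in [set k | a k != a k] by rewrite Hk inE.
  by rewrite inE eqxx.
- by apply/cleP => j; rewrite ffunE => /orP [/(cle_app Hab) //|/eqP ->].
- by rewrite (cle_hdist Haa') Hd addn1.
Qed.

Lemma cle_wt n (a b : cube n) : cle a b -> wt a <= wt b.
Proof. by move/cle_hdist => ->; apply: leq_addr. Qed.

Lemma wt_incr m n (f : cube m -> cube n) : strict_incr f ->
  forall a b, cle a b -> wt (f a) + (wt b - wt a) <= wt (f b).
Proof.
move=> Hf a b; have [d Hd] : exists d, wt b - wt a = d by eexists.
rewrite Hd; move: Hd.
elim: d a => [|d IH] a Hd Hab.
  by rewrite addn0; apply: cle_wt; apply: sincr_mono.
case: (eqVneq a b) => [E|ne]; first by rewrite E subnn in Hd.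
have [a' [H1 H2 H3 H4]] := step Hab ne.
have := IH a' _ H2; have := cle_wt H2; have := clt_wt (Hf _ _ H1); lia.
Qed.

Lemma wt_adj m n (f : cube m -> cube n) : adjacency_preserving f ->
  forall a b, cle a b -> wt (f b) <= wt (f a) + (wt b - wt a).
Proof.
move=> [Hf Ha] a b; have [d Hd] : exists d, wt b - wt a = d by eexists.
rewrite Hd; move: Hd.
elim: d a => [|d IH] a Hd Hab.
  case: (eqVneq a b) => [->|ne]; first by lia.
  by have [a' [H1 H2 H3 H4]] := step Hab ne; have := cle_wt H2; lia.
case: (eqVneq a b) => [E|ne]; first by rewrite E subnn in Hd.
have [a' [H1 H2 H3 H4]] := step Hab ne.
have := IH a' _ H2; have := cle_wt H2.
have := cle_hdist (sincr_mono Hf (proj1 (andP H1))); rewrite Ha //; lia.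
Qed.

Definition cbot n : cube n := [ffun _ => false].
Definition ctop n : cube n := [ffun _ => true].
Lemma cle_bot n (a : cube n) : cle (cbot n) a. Proof. by apply/cleP => i; rewrite ffunE. Qed.
Lemma cle_top n (a : cube n) : cle a (ctop n). Proof. by apply/cleP => i; rewrite ffunE. Qed.
Lemma wt_bot n : wt (cbot n) = 0.
Proof. by apply/eqP; rewrite cards_eq0; apply/eqP/setP => i; rewrite !inE ffunE. Qed.
Lemma wt_top n : wt (ctop n) = n.
Proof. by rewrite /wt -[RHS]card_ord -cardsT; apply: eq_card => i; rewrite !inE ffunE. Qed.
Lemma wt_le n (a : cube n) : wt a <= n.
Proof. by rewrite -[X in _ <= X]card_ord max_card. Qed.

Lemma extra_abs p p' r (x : cube p -> cube r) (mu : cube p -> cube p') G :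
  strict_incr x -> (forall a, x a = G (mu a)) ->
  (forall i, exists k, forall a, mu a i = x a k) ->
  (forall i : 'I_p', exists a b, mu a i != mu b i) ->
  [/\ p <= p', strict_incr mu & (adjacency_preserving mu <-> p = p')].
Proof.
move=> Hx HG Hc Hnc.
have Hmono : forall a b, cle a b -> cle (mu a) (mu b).
  move=> a b Hab; apply/cleP => i; have [k Hk] := Hc i; rewrite !Hk.
  exact: (cle_app (sincr_mono Hx Hab)).
have Hmu : strict_incr mu.
  move=> a b /[dup] Hab /andP [Hab1 _]; apply/andP; split; first exact: Hmono.
  apply/eqP => E; have /andP [_] := Hx a b Hab; by rewrite !HG E eqxx.
have Hbt : forall i, mu (cbot p) i = false /\ mu (ctop p) i = true.
  move=> i; have [a [b Hab]] := Hnc i.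
  have := cle_app (Hmono _ _ (cle_bot a)) i; have := cle_app (Hmono _ _ (cle_bot b)) i.
  have := cle_app (Hmono _ _ (cle_top a)) i; have := cle_app (Hmono _ _ (cle_top b)) i.
  move: Hab; case: (mu a i); case: (mu b i); case: (mu (cbot p) i); case: (mu (ctop p) i) => //=;
    intuition.
have Ebot : mu (cbot p) = cbot p' by apply/ffunP => i; rewrite ffunE (proj1 (Hbt i)).
have Etop : mu (ctop p) = ctop p' by apply/ffunP => i; rewrite ffunE (proj2 (Hbt i)).
have Hpp : p <= p'.
  have := wt_incr Hmu (cle_bot (ctop p)); rewrite Ebot Etop !wt_bot !wt_top; lia.
split => //; split.
- move=> Had; have := wt_adj Had (cle_bot (ctop p)); rewrite Ebot Etop !wt_bot !wt_top; lia.
- move=> Epp; subst p'; split => // a b.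
  wlog Hab : a b / cle a b.
    move=> W Hd; case: (hdist1_cmp Hd) => H; first exact: W.
    by rewrite hdistC; apply: W => //; rewrite hdistC.
  move=> Hd.
  have Hw := cle_hdist Hab; rewrite Hd in Hw.
  have H1 := wt_incr Hmu (cle_bot a); rewrite Ebot wt_bot in H1.
  have H2 := wt_incr Hmu (cle_top b); rewrite Etop wt_top in H2.
  have H3 := cle_hdist (Hmono _ _ Hab).
  have Hne : a != b by apply/eqP => E; move: Hd; rewrite E hdist_refl.
  have H4 := clt_wt (Hmu a b (introT andP (conj Hab Hne))).
  have := wt_le b; lia.
Qed.
Definition cbot0 n : cube n := [ffun _ => false].
Definition ordlt r : rel 'I_r := fun a b => val a < val b.

Lemma ordlt_trans r : transitive (@ordlt r).
Proof. move=> a b c; rewrite /ordlt; exact: ltn_trans. Qed.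
Lemma ordlt_irr r : irreflexive (@ordlt r).
Proof. by move=> a; rewrite /ordlt ltnn. Qed.

Lemma sorted_enum r (A : {pred 'I_r}) : sorted (@ordlt r) (enum A).
Proof.
rewrite /enum_mem -enumT; apply: sorted_filter; first exact: ordlt_trans.
by have := iota_ltn_sorted 0 r; rewrite -val_enum_ord sorted_map.
Qed.

Section Fdup.
End Fdup.
Definition Fi (T : eqType) (g0 : T) (W : seq T) :=
  [seq j <- iota 0 (size W) | index (nth g0 W j) W == j].
Definition fdup (T : eqType) (g0 : T) (W : seq T) := [seq nth g0 W j | j <- Fi g0 W].

Lemma mem_fdup (T : eqType) (g0 : T) W w : (w \in fdup g0 W) = (w \in W).
Proof.
apply/idP/idP.
- by move=> /mapP [j]; rewrite mem_filter mem_iota => /andP [_ /andP [_ Hj]] ->; apply: mem_nth.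
- move=> Hw; apply/mapP; exists (index w W); last by rewrite nth_index.
  by rewrite mem_filter mem_iota nth_index // eqxx /= index_mem.
Qed.

Lemma map_index_fdup (T : eqType) (g0 : T) W : map (index^~ W) (fdup g0 W) = Fi g0 W.
Proof.
rewrite -map_comp -[RHS]map_id; apply/eq_in_map => j.
by rewrite mem_filter => /andP [/eqP H _].
Qed.

Lemma uniq_fdup (T : eqType) (g0 : T) W : uniq (fdup g0 W).
Proof.
apply: (@map_uniq _ _ (index^~ W)); rewrite map_index_fdup.
by apply: filter_uniq; apply: iota_uniq.
Qed.

Lemma fdup_order (T : eqType) (g0 : T) W i j : i < j -> j < size (fdup g0 W) ->
  index (nth g0 (fdup g0 W) i) W < index (nth g0 (fdup g0 W) j) W.
Proof.
move=> ij js.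
have is_ : i < size (fdup g0 W) by apply: ltn_trans js.
rewrite -!(nth_map g0 0 (index^~ W)) // map_index_fdup.
have Hs : sorted ltn (Fi g0 W) by apply: sorted_filter; [exact: ltn_trans|exact: iota_ltn_sorted].
apply: (sorted_ltn_nth ltn_trans 0 Hs) => //; rewrite inE -map_index_fdup size_map //.
Qed.

Lemma idx_eq (T : eqType) (g0 : T) (G : seq T) w i : uniq G -> w \in G -> i < size G ->
  (index w G == i) = (w == nth g0 G i).
Proof.
move=> U Hw Hi; apply/eqP/eqP => [<-|->]; first by rewrite nth_index.
exact: index_uniq.
Qed.

Lemma index_codom (T : eqType) n m (s : 'I_n -> 'I_m) (h : 'I_n -> T) (g : 'I_m -> T) :
  (forall j i, (s j == i) = (h j == g i)) ->
  forall i, index i (codom s) = index (g i) (map h (enum 'I_n)).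
Proof.
move=> H i; rewrite codomE /index !find_map; apply: eq_find => j /=.
by rewrite /preim /= H.
Qed.

Definition cf p r (x : cube p -> cube r) (k : 'I_r) : {ffun cube p -> bool} := [ffun a => x a k].
Definition ncst p (g : {ffun cube p -> bool}) : bool := [exists a, exists b, g a != g b].
Definition NCs p r (x : cube p -> cube r) : {set 'I_r} := [set k | ncst (cf x k)].
Definition q0 p r (x : cube p -> cube r) := #|NCs x|.
Definition e0 p r (x : cube p -> cube r) (j : 'I_(q0 x)) : 'I_r := enum_val j.
Arguments e0 {p r} x j.
Definition Wc p r (x : cube p -> cube r) := [seq cf x (e0 x j) | j <- enum 'I_(q0 x)].
Definition g0 p : {ffun cube p -> bool} := [ffun _ => false].
Definition Gs p r (x : cube p -> cube r) := fdup (g0 p) (Wc x).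
Definition p0 p r (x : cube p -> cube r) := size (Gs x).

Lemma e0_sincr p r (x : cube p -> cube r) (i j : 'I_(q0 x)) : i < j -> e0 x i < e0 x j.
Proof.
move=> ij; rewrite /e0 !(enum_val_nth (e0 x i)).
apply: (sorted_ltn_nth (@ordlt_trans r) _ (sorted_enum _)) => //; rewrite inE -cardE.
- exact: ltn_ord.
- exact: ltn_ord.
Qed.

Lemma mem_codom_e0 p r (x : cube p -> cube r) k : (k \in codom (e0 x)) = (k \in NCs x).
Proof.
apply/idP/idP.
- by move=> /codomP [j ->]; apply: enum_valP.
- move=> Hk; rewrite -(enum_rankK_in Hk Hk); exact: codom_f.
Qed.

Lemma cf_Gs p r (x : cube p -> cube r) j : cf x (e0 x j) \in Gs x.
Proof. by rewrite /Gs mem_fdup; apply: map_f; rewrite mem_enum. Qed.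

Lemma s0_proof p r (x : cube p -> cube r) j : index (cf x (e0 x j)) (Gs x) < p0 x.
Proof. by rewrite index_mem cf_Gs. Qed.

Definition s0 p r (x : cube p -> cube r) (j : 'I_(q0 x)) : 'I_(p0 x) := Ordinal (s0_proof j).
Arguments s0 {p r} x j.

Definition mu0 p r (x : cube p -> cube r) : cmap p (p0 x) :=
  [ffun a => [ffun i : 'I_(p0 x) => nth (g0 p) (Gs x) i a]].
Definition phi0 p r (x : cube p -> cube r) : cmap (p0 x) (q0 x) :=
  [ffun y : cube (p0 x) => [ffun k : 'I_(q0 x) => y (s0 x k)]].
Definition psi0 p r (x : cube p -> cube r) : cmap (q0 x) r :=
  [ffun y : cube (q0 x) => [ffun k : 'I_r => if [pick j | e0 x j == k] is Some j then y j else x (cbot0 p) k]].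

Lemma nth_Wc p r (x : cube p -> cube r) (j : 'I_(q0 x)) : nth (g0 p) (Wc x) j = cf x (e0 x j).
Proof. by rewrite /Wc (nth_map j) ?size_enum_ord // nth_ord_enum. Qed.

Lemma mem_Wc p r (x : cube p -> cube r) w : w \in Wc x -> exists j, w = cf x (e0 x j).
Proof. by move=> /mapP [j _ ->]; exists j. Qed.

Lemma size_Wc p r (x : cube p -> cube r) : size (Wc x) = q0 x.
Proof. by rewrite size_map size_enum_ord. Qed.

Lemma ncst_e0 p r (x : cube p -> cube r) j : ncst (cf x (e0 x j)).
Proof. by have := enum_valP j; rewrite inE. Qed.

Lemma x_const p r (x : cube p -> cube r) k : k \notin NCs x -> forall a, x a k = x (cbot0 p) k.
Proof.
rewrite inE => /existsPn H a; have /existsPn := H a => /(_ (cbot0 p)).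
by rewrite !ffunE negbK => /eqP.
Qed.

Lemma e0_inj p r (x : cube p -> cube r) : injective (e0 x).
Proof.
move=> a b E; apply: val_inj; case: (ltngtP a b) => // H.
- by have := e0_sincr H; rewrite E ltnn.
- by have := e0_sincr H; rewrite E ltnn.
Qed.

Lemma uniq_Gs p r (x : cube p -> cube r) : uniq (Gs x).
Proof. exact: uniq_fdup. Qed.

Lemma nth_s0 p r (x : cube p -> cube r) (j : 'I_(q0 x)) : nth (g0 p) (Gs x) (s0 x j) = cf x (e0 x j).
Proof. by rewrite /= nth_index // cf_Gs. Qed.

Lemma fact1 p r (x : cube p -> cube r) a : x a = psi0 x (phi0 x (mu0 x a)).
Proof.
apply/ffunP => k; rewrite /psi0 !ffunE; case: (pickP (fun j => e0 x j == k)) => [j /eqP <-|H].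
- by rewrite /phi0 /mu0 !ffunE nth_s0 ffunE.
- rewrite x_const //; apply/negP; rewrite -mem_codom_e0 => /codomP [j Hj].
  by have := H j; rewrite Hj eqxx.
Qed.

Lemma fact3 p r (x : cube p -> cube r) : box_map (fun y => psi0 x y).
Proof.
apply: (@emb_box r (q0 x) _ (e0 x) (fun k => x (cbot0 p) k)); split.
- move=> i j; exact: e0_sincr.
- move=> y j; rewrite /psi0 !ffunE; case: (pickP (fun j0 => e0 x j0 == e0 x j)) => [j' /eqP /e0_inj -> //|H].
  by have := H j; rewrite eqxx.
- move=> y k Hk; rewrite /psi0 !ffunE; case: (pickP (fun j => e0 x j == k)) => [j /eqP Hj|//].
  by move: Hk; rewrite -Hj codom_f.
Qed.

Lemma fact4 p r (x : cube p -> cube r) : good_mu (fun y => mu0 x y).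
Proof.
split.
- move=> i; have : nth (g0 p) (Gs x) i \in Wc x by rewrite -(mem_fdup (g0 p)) mem_nth.
  move=> /mem_Wc [j Hj]; have := ncst_e0 j; rewrite -Hj => /existsP [a /existsP [b Hab]].
  by exists a, b; rewrite /mu0 !ffunE.
- move=> i j H; apply: val_inj; apply/eqP; rewrite -(nth_uniq (g0 p) _ _ (uniq_Gs x)) //.
  by apply/eqP/ffunP => a; have := H a; rewrite /mu0 !ffunE.
  exact: ltn_ord. exact: ltn_ord.
Qed.

Lemma fact2 p r (x : cube p -> cube r) : non_twisted (fun y => phi0 x y).
Proof.
have Hidx : forall i, index i (codom (s0 x)) = index (nth (g0 p) (Gs x) i) (Wc x).
  apply: index_codom => j i; rewrite -val_eqE /=.
  by apply: idx_eq; rewrite ?uniq_Gs ?cf_Gs.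
exists (s0 x); split.
- by move=> y; rewrite /phi0 ffunE.
- move=> i; have : nth (g0 p) (Gs x) i \in Wc x by rewrite -(mem_fdup (g0 p)) mem_nth.
  move=> /mem_Wc [j Hj]; apply/codomP; exists j; apply: val_inj => /=.
  by rewrite -Hj index_uniq ?uniq_Gs.
- move=> i j Hij; rewrite !Hidx; apply: fdup_order; last exact: ltn_ord.
  by rewrite Hij.
Qed.

Lemma uniq_d p r (x : cube p -> cube r) (d : decomposition p r) :
  is_decomposition x d -> d = existT _ (p0 x) (existT _ (q0 x) (mu0 x, phi0 x, psi0 x)).
Proof.
case: d => p' [q [[mu phi] psi]] /= [Hx Hnt Hbox [Hnc Hdist]].
have [e [v [He1 He2 He3]]] := box_emb Hbox.
have [s [Hs1 Hs2 Hs3]] := Hnt.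
pose gm := fun i : 'I_p' => [ffun a => mu a i] : {ffun cube p -> bool}.
have gm_inj : injective gm.
  move=> i j E; apply: Hdist => a; have := congr1 (fun g : {ffun cube p -> bool} => g a) E.
  by rewrite /gm !ffunE.
have Hxe : forall a j, x a (e j) = mu a (s j).
  move=> a j; rewrite Hx; have := He2 (phi (mu a)) j => /= ->.
  by have := Hs1 (mu a) => /= ->; rewrite ffunE.
have Hxv : forall a k, k \notin codom e -> x a k = v k.
  by move=> a k Hk; rewrite Hx; have := He3 (phi (mu a)) k Hk.
have HNC : forall k, (k \in NCs x) = (k \in codom e).
  move=> k; apply/idP/idP.
  - rewrite inE; apply: contraLR => Hk; apply/existsPn => a; apply/existsPn => b.
    by rewrite !ffunE !Hxv // eqxx.
  - move=> /codomP [j ->]; rewrite inE; have [a [b Hab]] := Hnc (s j).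
    by apply/existsP; exists a; apply/existsP; exists b; rewrite !ffunE !Hxe.
have Hmap : map e (enum 'I_q) = enum (NCs x).
  apply: (irr_sorted_eq (@ordlt_trans r) (@ordlt_irr r)).
  - apply: (homo_sorted (e := @ordlt q)); first by move=> i j; apply: He1.
    by have := iota_ltn_sorted 0 q; rewrite -val_enum_ord sorted_map.
  - exact: sorted_enum.
  - by move=> k; rewrite mem_enum HNC codomE.
have Hq : q = q0 x by rewrite /q0 cardE -Hmap size_map size_enum_ord.
subst q.
have Ee : forall j, e j = e0 x j.
  move=> j; rewrite /e0 (enum_val_nth (e j)) -Hmap (nth_map j) ?size_enum_ord //.
  by rewrite nth_ord_enum.
have Epsi : psi = psi0 x.
  apply/ffunP => y; apply/ffunP => k; rewrite /psi0 !ffunE.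
  case: (pickP (fun j => e0 x j == k)) => [j /eqP <-|H].
  - by rewrite -Ee; have := He2 y j.
  - have Hk : k \notin codom e.
      by apply/negP => /codomP [j Hj]; have := H j; rewrite -Ee -Hj eqxx.
    by have := He3 y k Hk => /= ->; rewrite (Hxv (cbot0 p) k Hk).
have HW : Wc x = map (fun j => gm (s j)) (enum 'I_(q0 x)).
  by apply: eq_map => j; apply/ffunP => a; rewrite !ffunE -Ee Hxe.
have HGm : map gm (enum 'I_p') = Gs x.
  apply: (irr_sorted_eq (leT := fun u w => index u (Wc x) < index w (Wc x))).
  - move=> ? ? ?; exact: ltn_trans.
  - by move=> ?; rewrite /= ltnn.
  - apply/(sortedP (g0 p)) => i; rewrite size_map size_enum_ord => Hi.
    have Hi' : i < p' by apply: ltnW.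
    rewrite (nth_map (Ordinal Hi')) ?size_enum_ord // (nth_map (Ordinal Hi')) ?size_enum_ord //.
    have -> : nth (Ordinal Hi') (enum 'I_p') i = Ordinal Hi'.
      by apply: val_inj; rewrite /= nth_enum_ord.
    have -> : nth (Ordinal Hi') (enum 'I_p') i.+1 = Ordinal Hi.
      by apply: val_inj; rewrite /= nth_enum_ord.
    have Hidx : forall i, index i (codom s) = index (gm i) (Wc x).
      move=> i0; rewrite HW; apply: index_codom => j i1 /=; by rewrite (inj_eq gm_inj).
    by have := Hs3 (Ordinal Hi') (Ordinal Hi) erefl; rewrite !Hidx.
  - by apply/(sortedP (g0 p)) => i Hi; apply: fdup_order.
  - move=> u; rewrite /Gs mem_fdup HW; apply/mapP/mapP.
    + move=> [i _ ->]; have /codomP [j ->] := Hs2 i; by exists j; rewrite ?mem_enum.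
    + by move=> [j _ ->]; exists (s j); rewrite ?mem_enum.
have Hp : p' = p0 x by rewrite /p0 -HGm size_map size_enum_ord.
subst p'.
have Emu : mu = mu0 x.
  apply/ffunP => a; apply/ffunP => i; rewrite /mu0 !ffunE -HGm (nth_map i) ?size_enum_ord //.
  by rewrite nth_ord_enum ffunE.
have Es : forall j, s j = s0 x j.
  move=> j; apply: val_inj => /=.
  have -> : cf x (e0 x j) = gm (s j) by apply/ffunP => a; rewrite !ffunE -Ee Hxe.
  by rewrite -HGm index_map // index_enum_ord.
have Ephi : phi = phi0 x.
  apply/ffunP => y; have := Hs1 y => /= ->; rewrite /phi0 ffunE; apply/ffunP => k.
  by rewrite !ffunE Es.
by rewrite Emu Ephi Epsi.
Qed.

Theorem proposition8p4 (p r : nat) (x : cube p -> cube r) :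
  strict_incr x ->
  (exists! d : decomposition p r, is_decomposition x d) /\
  (forall d : decomposition p r, is_decomposition x d -> decomposition_extra d).
Proof.
move=> Hx; split.
- exists (existT _ (p0 x) (existT _ (q0 x) (mu0 x, phi0 x, psi0 x))); split.
  + split; [exact: fact1 | exact: fact2 | exact: fact3 | exact: fact4].
  + by move=> d Hd; symmetry; apply: uniq_d.
- move=> [p' [q [[mu phi] psi]]] /= [Hxd Hnt Hbox [Hnc Hdist]].
  have [e [v [He1 He2 He3]]] := box_emb Hbox.
  have [s [Hs1 Hs2 Hs3]] := Hnt.
  apply: (@extra_abs p p' r x (fun y => mu y) (fun y => psi (phi y))) => //.
  move=> i; have /codomP [j ->] := Hs2 i; exists (e j) => a.
  rewrite Hxd; have := He2 (phi (mu a)) j => /= ->.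
  by have := Hs1 (mu a) => /= ->; rewrite ffunE.
Qed.
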